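(* Consider a financial network (as described in the context) whose cross-holding graph is acyclic, and suppose one entry (edge weight) of the cross-holding matrix $C$ changes by at most $\epsilon$, producing a network whose cross-holding graph is also acyclic, with the asset holdings $D$ and asset prices $\vec p$ unchanged. Then no institution's market value changes by more than $\epsilon\|\vec p\|_1$.
   Context: Model: there are $n$ financial institutions and $m$ underlying assets; asset $k$ has price $p_k\ge 0$. $D_{ik}\ge 0$ is the fraction of asset $k$ owned by institution $i$ (so $\sum_i D_{ik}\le 1$ for each $k$). $C=(C_{ij})$ is an $n\times n$ nonnegative matrix, $C_{ij}$ being the fraction of institution $j$ owned by institution $i$, with $C_{ii}=0$. The self-holding of institution $j$ is $\hat C_{jj}=1-\sum_i C_{ij}$, assumed to satisfy $\hat C_{jj}>0$; $\hat C$ is the diagonal matrix with these entries. The equity valuation is $\vec V=(I-C)^{-1}D\vec p$ (the solution of $\vec V=D\vec p+C\vec V$), and the market valuation is $\vec v=\hat C\vec V=\hat C(I-C)^{-1}D\vec p$; $v_i$ is the market value of institution $i$. The cross-holding graph is the directed graph with an edge from $j$ to $i$ whenever $C_{ij}>0$. *)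

(* Defs.v *)
From mathcomp Require Import all_boot all_order all_algebra.
Set Implicit Arguments. Unset Strict Implicit. Unset Printing Implicit Defensive.
Import Order.TTheory GRing.Theory Num.Theory.
Local Open Scope ring_scope.

Section Network.
Variables (R : realFieldType) (n m : nat).

Definition self_holding (C : 'M[R]_n) (j : 'I_n) : R := 1 - \sum_(i < n) C i j.

Definition hatC (C : 'M[R]_n) : 'M[R]_n := \matrix_(i, j) ((i == j)%:R * self_holding C j).

Definition valid_cross_holding (C : 'M[R]_n) : Prop :=
  (forall i j, 0 <= C i j) /\ (forall i, C i i = 0) /\ (forall j, 0 < self_holding C j).

Definition valid_holdings (D : 'M[R]_(n, m)) : Prop :=
  (forall i k, 0 <= D i k) /\ (forall k, \sum_(i < n) D i k <= 1).

Definition xgraph (C : 'M[R]_n) : rel 'I_n := fun j i => 0 < C i j.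

Definition acyclic_graph (C : 'M[R]_n) : Prop :=
  forall i j : 'I_n, xgraph C j i -> ~~ connect (xgraph C) i j.

Definition equity_val (C : 'M[R]_n) (D : 'M[R]_(n, m)) (p : 'cV[R]_m) : 'cV[R]_n :=
  invmx (1%:M - C) *m (D *m p).

Definition market_val (C : 'M[R]_n) (D : 'M[R]_(n, m)) (p : 'cV[R]_m) : 'cV[R]_n :=
  hatC C *m equity_val C D p.

Definition norm1 (p : 'cV[R]_m) : R := \sum_(k < m) `|p k 0|.

End Network.

(* Main.v *)
Require Import Defs.
From mathcomp Require Import all_boot all_order all_algebra.
From mathcomp Require Import ring lra.
Set Implicit Arguments. Unset Strict Implicit. Unset Printing Implicit Defensive.
Import Order.TTheory GRing.Theory Num.Theory.
Local Open Scope ring_scope.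

Section Aux.
Variables (R : realFieldType) (n : nat) (C : 'M[R]_n).
Hypothesis hC : valid_cross_holding C.

Lemma colsum_lt1 j : \sum_i C i j < 1.
Proof. case: hC => _ [_ h]; have := h j; rewrite /self_holding subr_gt0 //. Qed.

Lemma Cge0 i j : 0 <= C i j.
Proof. by case: hC. Qed.

Lemma min_principle (z f : 'I_n -> R) : (forall j, 0 <= f j) ->
  (forall j, z j = \sum_i z i * C i j + f j) -> forall j, 0 <= z j.
Proof.
move=> f0 hz j0.
case: (@arg_minP _ _ _ j0 predT (fun j => z j) isT) => j _ hmin.
apply: le_trans (hmin j0 isT).
have := colsum_lt1 j; have := f0 j; have := hz j.
set s := \sum_i C i j; set t := \sum_i _ => e1 e2 e3.
have hs : z j * s <= t.
  rewrite /s /t mulr_sumr; apply: ler_sum => i _.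
  apply: ler_wpM2r; [exact: Cge0 | exact: hmin].
have : z j * (1 - s) >= 0 by rewrite mulrBr mulr1 subr_ge0; lra.
rewrite pmulr_lge0 // subr_gt0 //.
Qed.

Lemma max_zero (z : 'I_n -> R) (b : 'I_n) : (forall j, 0 <= z j) ->
  (forall j, z j = \sum_i z i * C i j + (b == j)%:R) ->
  forall j, ~~ connect (xgraph C) j b -> z j = 0.
Proof.
move=> z0 hz j0 hj0.
case: (@arg_maxP _ _ _ j0 (fun j => ~~ connect (xgraph C) j b) (fun j => z j) hj0) => j hj hmax.
suff : z j <= 0 by move=> h; apply/eqP; rewrite eq_le z0 andbT (le_trans (hmax j0 hj0)).
have hbj : (b == j) = false.
  apply/negP => /eqP ebj; move: hj; by rewrite -ebj connect0.
have := colsum_lt1 j; have := hz j; rewrite hbj addr0.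
set s := \sum_i C i j; set t := \sum_i _ => e1 e2.
have hs : t <= z j * s.
  rewrite /s /t mulr_sumr; apply: ler_sum => i _.
  have [Cp|] := ltP 0 (C i j).
    apply: ler_wpM2r; first exact: Cge0.
    apply: hmax; apply: contra hj => hib.
    apply: connect_trans hib; exact: connect1.
  move=> Cle; have -> : C i j = 0 by apply/eqP; rewrite eq_le Cle Cge0.
  by rewrite !mulr0.
have : z j * (1 - s) <= 0 by rewrite mulrBr mulr1 subr_le0; lra.
rewrite pmulr_lle0 // subr_gt0 //.
Qed.

Lemma rowmul_entry (v : 'rV[R]_n) j :
  (v *m (1%:M - C)) 0 j = v 0 j - \sum_i v 0 i * C i j.
Proof.
rewrite mulmxBr mulmx1 !mxE; congr (_ - _); apply: eq_bigr => i _; by [].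
Qed.

Lemma unit1C : (1%:M - C) \in unitmx.
Proof.
rewrite unitmxE unitfE; apply/negP => /det0P [v vn0 hv].
have hz j : `|v 0 j| <= \sum_i `|v 0 i| * C i j.
  have := rowmul_entry v j; rewrite hv mxE => /eqP; rewrite eq_sym subr_eq0 => /eqP ->.
  apply: le_trans (ler_norm_sum _ _ _) _; apply: ler_sum => i _.
  by rewrite normrM (ger0_norm (Cge0 _ _)).
have all0 : forall j0, `|v 0 j0| <= 0.
  move=> j0.
  case: (@arg_maxP _ _ _ j0 predT (fun j => `|v 0 j|) isT) => j _ hmax.
  apply: le_trans (hmax j0 isT) _.
  have := colsum_lt1 j; have := hz j.
  set s := \sum_i C i j; set t := \sum_i _ => e1 e2.
  have hs : t <= `|v 0 j| * s.
    rewrite /s /t mulr_sumr; apply: ler_sum => i _.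
    apply: ler_wpM2r; [exact: Cge0 | exact: hmax].
  have : `|v 0 j| * (1 - s) <= 0 by rewrite mulrBr mulr1 subr_le0; lra.
  rewrite pmulr_lle0 // subr_gt0 //.
move/negP: vn0; apply; apply/eqP/matrixP => i j; rewrite (ord1 i) mxE.
by apply/eqP; rewrite -normr_le0.
Qed.

Definition Mi := invmx (1%:M - C).

Lemma M_row b j : Mi b j = \sum_i Mi b i * C i j + (b == j)%:R.
Proof.
have e : (Mi *m (1%:M - C)) b j = (1%:M : 'M[R]_n) b j by rewrite /Mi mulVmx ?unit1C.
have e2 : (row b Mi *m (1%:M - C)) 0 j = (Mi *m (1%:M - C)) b j by rewrite -row_mul mxE.
move: e; rewrite -e2 rowmul_entry !mxE => e.
rewrite -e.
have -> : \sum_i row b Mi 0 i * C i j = \sum_i Mi b i * C i j.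
  by apply: eq_bigr => i _; rewrite mxE.
by rewrite addrC subrK.
Qed.

Lemma M_ge0 i j : 0 <= Mi i j.
Proof.
apply: (@min_principle (fun j => Mi i j) (fun j => (i == j)%:R)) => //.
exact: M_row.
Qed.

Lemma M_le1 b j : acyclic_graph C -> Mi b j <= 1.
Proof.
move=> hac.
have hz := M_row b.
have z0 := M_ge0 b.
have sum0 : \sum_i Mi b i * C i b = 0.
  apply: big1 => i _.
  have [Cp|Cle] := ltP 0 (C i b).
    have nc := hac i b Cp.
    by rewrite (@max_zero (fun j => Mi b j) b z0 hz i nc) mul0r.
  have -> : C i b = 0 by apply/eqP; rewrite eq_le Cle Cge0.
  by rewrite mulr0.
case: (@arg_maxP _ _ _ j predT (fun j => Mi b j) isT) => k _ hmax.
apply: le_trans (hmax j isT) _.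
have [ekb|nkb] := eqVneq b k.
  by rewrite -ekb hz sum0 eqxx add0r.
have := colsum_lt1 k; have := hz k; rewrite (negPf nkb) addr0.
set s := \sum_i C i k; set t := \sum_i _ => e1 e2.
have hs : t <= Mi b k * s.
  rewrite /s /t mulr_sumr; apply: ler_sum => i _.
  apply: ler_wpM2r; [exact: Cge0 | exact: hmax].
have : Mi b k * (1 - s) <= 0 by rewrite mulrBr mulr1 subr_le0; lra.
rewrite pmulr_lle0 ?subr_gt0 // => h; apply: le_trans h _; exact: ler01.
Qed.

Lemma sh_pos i : 0 < self_holding C i.
Proof. by case: hC => _ []. Qed.

Lemma colsum_A a : \sum_i self_holding C i * Mi i a = 1.
Proof.
have e k : \sum_i (1%:M - C) k i * Mi i a = (k == a)%:R.
  have e : ((1%:M - C) *m Mi) k a = (1%:M : 'M[R]_n) k a by rewrite /Mi mulmxV ?unit1C.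
  by move: e; rewrite !mxE.
have -> : 1 = \sum_k ((k == a)%:R : R).
  by rewrite (bigD1 a) //= eqxx big1 ?addr0 // => k /negPf ->.
under [RHS]eq_bigr do rewrite -e.
rewrite exchange_big /=; apply: eq_bigr => i _.
rewrite -mulr_suml; congr (_ * _).
rewrite /self_holding.
under [RHS]eq_bigr do rewrite !mxE.
rewrite sumrB; congr (_ - _).
by rewrite (bigD1 i) //= eqxx big1 ?addr0 // => k /negPf nk; rewrite nk.
Qed.

Lemma A_bounds i a : 0 <= self_holding C i * Mi i a <= 1.
Proof.
have h0 k : 0 <= self_holding C k * Mi k a.
  by rewrite mulr_ge0 ?M_ge0 // ltW // sh_pos.
rewrite h0 /= -(colsum_A a) (bigD1 i) //= lerDl.
by apply: sumr_ge0 => k _.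
Qed.

End Aux.

Lemma hatC_entry (R : realFieldType) (n : nat) (C : 'M[R]_n) (y : 'cV[R]_n) i :
  (hatC C *m y) i 0 = self_holding C i * y i 0.
Proof.
rewrite mxE (bigD1 i) //= big1 ?addr0.
  by rewrite mxE eqxx mul1r.
by move=> j /negPf nj; rewrite mxE eq_sym nj mul0r mul0r.
Qed.

Theorem corollary2 (R : realFieldType) (n m : nat)
    (C C' : 'M[R]_n) (D : 'M[R]_(n, m)) (p : 'cV[R]_m)
    (a b : 'I_n) (eps : R) :
  (forall k, 0 <= p k 0) ->
  valid_holdings D ->
  valid_cross_holding C -> acyclic_graph C ->
  valid_cross_holding C' -> acyclic_graph C' ->
  (forall i j, (i, j) != (a, b) -> C' i j = C i j) ->
  `|C' a b - C a b| <= eps ->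
  forall i, `|market_val C' D p i 0 - market_val C D p i 0| <= eps * norm1 p.
Proof.
move=> hp hD hC hac hC' hac' hdiff hde i.
set d := C' a b - C a b.
have hΔ l k : C' l k - C l k = ((l == a) && (k == b))%:R * d.
  case: (eqVneq (l, k) (a, b)) => [[-> ->]|ne]; first by rewrite !eqxx mul1r.
  rewrite hdiff // subrr; move: ne; rewrite xpair_eqE => /negPf ->; by rewrite mul0r.
have hΔm l k : (C' - C) l k = ((l == a) && (k == b))%:R * d by rewrite !mxE hΔ.
rewrite /market_val /equity_val !hatC_entry.
change (invmx (1%:M - C)) with (Mi C); change (invmx (1%:M - C')) with (Mi C').
set M := Mi C; set M' := Mi C'; set x := D *m p.
set y := M *m x; set w := M' *m x.
have hMM : M' = M + M' *m (C' - C) *m M.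
  have e1 : M' *m (1%:M - C) *m M = M' by rewrite -mulmxA /M /Mi mulmxV ?unit1C // mulmx1.
  have e2 : M' *m (1%:M - C') *m M = M by rewrite /M' /Mi mulVmx ?unit1C // mul1mx.
  have eΔ : C' - C = (1%:M - C) - (1%:M - C') by rewrite opprB [RHS]addrC addrA subrK. 
  by rewrite eΔ mulmxBr mulmxBl e1 e2 addrC subrK.
have hent : ((M' *m (C' - C)) *m y) i 0 = M' i a * d * y b 0.
  rewrite mxE (bigD1 b) //= big1 ?addr0; last first.
    move=> k /negPf nk; rewrite mxE big1 ?mul0r // => l _; by rewrite hΔm nk andbF mul0r mulr0.
  rewrite mxE (bigD1 a) //= big1 ?addr0; last first.
    by move=> l /negPf nl; rewrite hΔm nl mul0r mulr0.
  by rewrite hΔm !eqxx mul1r.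
have hw : w i 0 = y i 0 + M' i a * d * y b 0.
  by rewrite /w {1}hMM mulmxDl mxE -!mulmxA -[M *m (x)]/y mulmxA hent.
have hsh : self_holding C i = self_holding C' i + (i == b)%:R * d.
  rewrite /self_holding.
  have -> : \sum_k C' k i = \sum_k C k i + \sum_k ((k == a) && (i == b))%:R * d.
    by rewrite -big_split; apply: eq_bigr => k _ /=; rewrite -hΔ addrC subrK.
  have -> : \sum_k ((k == a) && (i == b))%:R * d = (i == b)%:R * d.
    rewrite (bigD1 a) //= eqxx big1 ?addr0 //; by move=> k /negPf nk; rewrite nk mul0r.
  by rewrite opprD addrA subrK.
set s' := self_holding C' i.
set c : R := (i == b)%:R.
have key : s' * w i 0 - self_holding C i * y i 0 = d * y b 0 * (s' * M' i a - c).
  rewrite hw hsh -/s' /c; case: (eqVneq i b) => [eib|nib].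
    rewrite -eib; ring.
  rewrite mul0r subr0 addr0; ring.
rewrite key.
have x0 j : 0 <= x j 0.
  rewrite mxE; apply: sumr_ge0 => k _; apply: mulr_ge0 => //; by case: hD.
have yb0 : 0 <= y b 0.
  rewrite mxE; apply: sumr_ge0 => k _; apply: mulr_ge0 => //; exact: M_ge0.
have ybN : y b 0 <= norm1 p.
  apply: (@le_trans _ _ (\sum_j x j 0)).
    rewrite mxE; apply: ler_sum => j _.
    by rewrite -[leRHS]mul1r; apply: ler_wpM2r => //; exact: M_le1.
  rewrite /norm1.
  have -> : \sum_j x j 0 = \sum_k (\sum_j D j k) * p k 0.
    under eq_bigr do rewrite mxE.
    rewrite exchange_big /=; apply: eq_bigr => k _; by rewrite mulr_suml.
  apply: ler_sum => k _; rewrite ger0_norm //.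
  by rewrite -[leRHS]mul1r; apply: ler_wpM2r => //; case: hD.
have hA : 0 <= s' * M' i a <= 1 := A_bounds hC' i a.
have hc : `|s' * M' i a - c| <= 1.
  move/andP: hA => [h1 h2]; rewrite ler_norml /c.
  by case: (i == b); apply/andP; split; rewrite /=; lra.
rewrite normrM normrM (ger0_norm yb0) -[leRHS]mulr1.
apply: ler_pM => //; first by rewrite mulr_ge0.
apply: ler_pM => //.
Qed.
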